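(* Consider the system $x_{k+1}=Ax_k+Bu_k$ with $(A,B)$ stabilizable, constraint sets $\mathcal{X}=\{x\mid C_xx\le c_x\}$, $\mathcal{U}=\{u\mid C_uu\le c_u\}$ (with $0\in\operatorname{int}\mathcal{X}$, $0\in\operatorname{int}\mathcal{U}$), cost $J=\sum_{k=0}^\infty x_k^TQx_k+u_k^TRu_k$ with $Q$ positive semidefinite and $R$ positive definite, and LQR gain $K_{\text{lqr}}$ (the optimal unconstrained feedback $u_k=-K_{\text{lqr}}x_k$ for $J$). Let the system be controlled by a ReLU network $u_k=\mathcal{N}(x_k;\theta)$ with $L$ hidden layers, closed loop $f_{\text{cl}}(x)=Ax+B\mathcal{N}(x;\theta)$, let $\Gamma_{\text{eq}}=G(0)$ and $\mathcal{R}_{\text{eq}}=\{x\mid G(x)=\Gamma_{\text{eq}}\}$, and suppose $W_{L+1}(W_{\Gamma_{\text{eq}},L}x+b_{\Gamma_{\text{eq}},L})+b_{L+1}=-K_{\text{lqr}}x$ for all $x\in\mathbb{R}^{n_x}$. Let $\mathcal{R}_{\text{lqr}}$ be the set of initial states from which the LQR feedback $u_k=-K_{\text{lqr}}x_k$ yields $x_k\in\mathcal{X}$, $u_k\in\mathcal{U}$ for all $k\ge0$, and let $\mathcal{R}_{\text{as}}$ be an admissible control-invariant set for the closed loop with $\mathcal{R}_{\text{as}}\subseteq\mathcal{R}_{\text{eq}}\cap\mathcal{R}_{\text{lqr}}$. Let $\mathcal{X}_{\text{in}}=\{x\mid C_{\text{in}}x\le c_{\text{in}}\}$ be a polytope,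 $k\ge1$, $C_{\text{out}}\in\mathbb{R}^{n_{\text{out}}\times n_x}$, $c_{\text{out}}^{*(i)}=\max_{x_0\in\mathcal{X}_{\text{in}}}C_{\text{out}}^{(i)}f_{\text{cl}}^k(x_0)$ and $\mathcal{X}^*_{k,\text{out}}=\{x\mid C_{\text{out}}x\le c^*_{\text{out}}\}$. If $\mathcal{X}^*_{k,\text{out}}\subseteq\mathcal{R}_{\text{as}}$, then the neural network controller drives the system to the origin optimally with respect to $J$ (i.e. it applies the LQR input $-K_{\text{lqr}}x$) for all $x\in\mathcal{R}_{\text{as}}$, and drives the system asymptotically to the origin for all $x\in\mathcal{X}_{\text{in}}$.
   Context: A ReLU network is $\mathcal{N}(x;\theta)=W_{L+1}\xi_L+b_{L+1}$ with $\xi_0=x$, $\xi_l=\max(0,W_l\xi_{l-1}+b_l)$ elementwise for $l=1,\dots,L$, where $W_l\in\mathbb{R}^{n_l\times n_{l-1}}$ ($n_0=n_x$), $b_l\in\mathbb{R}^{n_l}$, $W_{L+1}\in\mathbb{R}^{n_u\times n_L}$, $b_{L+1}\in\mathbb{R}^{n_u}$. The activation pattern is $G(x)=(\gamma_1(x),\dots,\gamma_L(x))$, $\gamma_l(x)^{(i)}=1$ iff $W_l^{(i)}\xi_{l-1}+b_l^{(i)}\ge0$, else $0$. For a fixed pattern $\Gamma=(\gamma_1,\dots,\gamma_L)$ set $\eta_0=x$, $\eta_l=\gamma_l\odot(W_l\eta_{l-1}+b_l)$; then $\eta_L=W_{\Gamma,L}x+b_{\Gamma,L}$ defines $W_{\Gamma,L},b_{\Gamma,L}$,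 and $\mathcal{N}(x;\theta)=W_{L+1}(W_{\Gamma_{\text{eq}},L}x+b_{\Gamma_{\text{eq}},L})+b_{L+1}$ on $\mathcal{R}_{\text{eq}}$. $f_{\text{cl}}^k$ denotes the $k$-fold composition. A set $\mathcal{C}$ is an admissible control-invariant set for the closed loop if $\mathcal{N}(x;\theta)\in\mathcal{U}$ for all $x\in\mathcal{C}$ and $f_{\text{cl}}(\mathcal{C})\subseteq\mathcal{C}$. *)

(* Defs.v *)
From HB Require Import structures.
From mathcomp Require Import all_boot all_order all_algebra.
From mathcomp Require Import all_classical all_reals all_analysis.
Unset Printing Implicit Defensive.
Import Order.TTheory GRing.Theory Num.Theory.
Import numFieldNormedType.Exports.
Local Open Scope classical_set_scope.
Local Open Scope ring_scope.

Section Defs.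
Context {R : realType}.

Definition in_poly {m n : nat} (C : 'M[R]_(m, n)) (c : 'cV[R]_m) (x : 'cV[R]_n) : Prop :=
  forall i : 'I_m, (C *m x) i 0 <= c i 0.

Definition zero_in_interior {m n : nat} (C : 'M[R]_(m, n)) (c : 'cV[R]_m) : Prop :=
  exists2 e : R, 0 < e &
    forall x : 'cV[R]_n, (forall j, `|x j 0| < e) -> in_poly C c x.

Definition cvg_to_origin {n : nat} (u : nat -> 'cV[R]_n) : Prop :=
  forall j : 'I_n, (fun k => u k j 0) @ \oo --> (0 : R).

Definition schur_stable {n : nat} (M : 'M[R]_n) : Prop :=
  forall x : 'cV[R]_n, cvg_to_origin (fun k => iter k (mulmx M) x).

Definition stabilizable {nx nu : nat} (A : 'M[R]_nx) (B : 'M[R]_(nx, nu)) : Prop :=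
  exists F : 'M[R]_(nu, nx), schur_stable (A + B *m F).

Definition psd {n : nat} (Q : 'M[R]_n) : Prop :=
  Q^T = Q /\ forall x : 'cV[R]_n, 0 <= (x^T *m Q *m x) 0 0.

Definition pd {n : nat} (Q : 'M[R]_n) : Prop :=
  Q^T = Q /\ forall x : 'cV[R]_n, x != 0 -> 0 < (x^T *m Q *m x) 0 0.

(* LQR gain: K = (R + B^T P B)^{-1} B^T P A where P is the (symmetric psd)
   stabilizing solution of the discrete algebraic Riccati equation. *)
Definition is_lqr_gain {nx nu : nat} (A : 'M[R]_nx) (B : 'M[R]_(nx, nu))
    (Q : 'M[R]_nx) (Rc : 'M[R]_nu) (K : 'M[R]_(nu, nx)) : Prop :=
  exists P : 'M[R]_nx,
    [/\ psd P,
        Rc + B^T *m P *m B \in unitmx,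
        K = invmx (Rc + B^T *m P *m B) *m (B^T *m P *m A),
        P = A^T *m P *m A - A^T *m P *m B *m K + Q
      & schur_stable (A - B *m K)].

(* ReLU networks: widths n : nat -> nat (n 0 = input dimension),
   hidden layer l+1 has weights W l : 'M_(n l.+1, n l), bias b l;
   output layer Wo, bo. *)
Section Net.
Variables (n : nat -> nat) (nu : nat) (L : nat).
Variables (W : forall l, 'M[R]_(n l.+1, n l)) (b : forall l, 'cV[R]_(n l.+1)).
Variables (Wo : 'M[R]_(nu, n L)) (bo : 'cV[R]_nu).

Definition relu {m : nat} (v : 'cV[R]_m) : 'cV[R]_m := map_mx (fun a => Num.max 0 a) v.

Fixpoint nn_xi (x : 'cV[R]_(n 0%N)) (l : nat) : 'cV[R]_(n l) :=
  match l return 'cV[R]_(n l) with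
  | 0 => x
  | l'.+1 => relu (W l' *m nn_xi x l' + b l')
  end.

Definition nn_out (x : 'cV[R]_(n 0%N)) : 'cV[R]_nu := Wo *m nn_xi x L + bo.

(* activation pattern: nn_act x l i = gamma_{l+1}(x)^{(i)} *)
Definition nn_act (x : 'cV[R]_(n 0%N)) (l : nat) (i : 'I_(n l.+1)) : bool :=
  0 <= (W l *m nn_xi x l + b l) i 0.

Definition in_Req (x : 'cV[R]_(n 0%N)) : Prop :=
  forall l, (l < L)%N -> forall i, nn_act x l i = nn_act 0 l i.

Fixpoint nn_eta (g : forall l, 'I_(n l.+1) -> bool) (x : 'cV[R]_(n 0%N)) (l : nat)
  : 'cV[R]_(n l) :=
  match l return 'cV[R]_(n l) with
  | 0 => x
  | l'.+1 => \col_i (if g l' i then (W l' *m nn_eta g x l' + b l') i 0 else 0)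
  end.

End Net.
End Defs.

Section Closed.
Context {R : realType}.
Definition fcl {nx nu : nat} (A : 'M[R]_nx) (B : 'M[R]_(nx, nu))
  (pi : 'cV[R]_nx -> 'cV[R]_nu) (x : 'cV[R]_nx) : 'cV[R]_nx :=
  A *m x + B *m pi x.

Definition in_Rlqr {nx nu mx mu : nat} (A : 'M[R]_nx) (B : 'M[R]_(nx, nu))
  (K : 'M[R]_(nu, nx)) (Cx : 'M[R]_(mx, nx)) (cx : 'cV[R]_mx)
  (Cu : 'M[R]_(mu, nu)) (cu : 'cV[R]_mu) (x0 : 'cV[R]_nx) : Prop :=
  forall k : nat,
    in_poly Cx cx (iter k (fcl A B (fun x => - (K *m x))) x0) /\
    in_poly Cu cu (- (K *m iter k (fcl A B (fun x => - (K *m x))) x0)).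

Definition admissible_invariant {nx nu mu : nat} (A : 'M[R]_nx) (B : 'M[R]_(nx, nu))
  (pi : 'cV[R]_nx -> 'cV[R]_nu) (Cu : 'M[R]_(mu, nu)) (cu : 'cV[R]_mu)
  (C : 'cV[R]_nx -> Prop) : Prop :=
  forall x, C x -> in_poly Cu cu (pi x) /\ C (fcl A B pi x).
End Closed.

(* Main.v *)
Require Import Defs.
From HB Require Import structures.
From mathcomp Require Import all_boot all_order all_algebra.
From mathcomp Require Import all_classical all_reals all_analysis.
Import Order.TTheory GRing.Theory Num.Theory.
Local Open Scope ring_scope.

Lemma xi_eta (R : realType) (n : nat -> nat) (L : nat)
  (W : forall l, 'M[R]_(n l.+1, n l)) (b : forall l, 'cV[R]_(n l.+1)) x :
  in_Req n L W b x ->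
  forall l, (l <= L)%N ->
  nn_xi n W b x l = nn_eta n W b (fun l i => nn_act n W b 0 l i) x l.
Proof.
move=> Hx; elim=> [|l IH] Hl.
  by [].
have Hl' : (l < L)%N by [].
apply/matrixP => i j.
rewrite (ord1 j) [nn_xi _ _ _ _ _]/= [nn_eta _ _ _ _ _ _]/=.
rewrite /relu mxE [LHS]mxE.
rewrite -IH; last exact: ltnW.
have E : nn_act n W b 0 l i = (0 <= (W l *m nn_xi n W b x l + b l) i 0) by rewrite -(Hx l Hl' i).
idtac.
rewrite E.
by rewrite maxEle; case: ifP.
Qed.

Theorem corollary1 (R : realType)
  (* ReLU network: widths n 0 = n_x, n 1, ..., n L; output dimension nu *)
  (n : nat -> nat) (nu L : nat)
  (W : forall l, 'M[R]_(n l.+1, n l)) (b : forall l, 'cV[R]_(n l.+1))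
  (Wo : 'M[R]_(nu, n L)) (bo : 'cV[R]_nu)
  (* system and constraints *)
  (A : 'M[R]_(n 0%N)) (B : 'M[R]_(n 0%N, nu))
  (mx mu : nat) (Cx : 'M[R]_(mx, n 0%N)) (cx : 'cV[R]_mx)
  (Cu : 'M[R]_(mu, nu)) (cu : 'cV[R]_mu)
  (* cost and LQR gain *)
  (Q : 'M[R]_(n 0%N)) (Rc : 'M[R]_nu) (K : 'M[R]_(nu, n 0%N))
  (* admissible invariant set, input polytope, output template *)
  (Ras : 'cV[R]_(n 0%N) -> Prop)
  (nin : nat) (Cin : 'M[R]_(nin, n 0%N)) (cin : 'cV[R]_nin)
  (k nout : nat) (Cout : 'M[R]_(nout, n 0%N)) (cout : 'cV[R]_nout) :
  stabilizable A B ->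
  zero_in_interior Cx cx ->
  zero_in_interior Cu cu ->
  psd Q ->
  pd Rc ->
  is_lqr_gain A B Q Rc K ->
  (* the affine piece on R_eq equals the LQR law *)
  (forall x : 'cV[R]_(n 0%N),
     Wo *m nn_eta n W b (fun l i => nn_act n W b 0 l i) x L + bo = - (K *m x)) ->
  admissible_invariant A B (nn_out n nu L W b Wo bo) Cu cu Ras ->
  (forall x, Ras x -> in_Req n L W b x /\ in_Rlqr A B K Cx cx Cu cu x) ->
  (1 <= k)%N ->
  (* cout^(i) = max_{x0 in X_in} Cout^(i) f_cl^k(x0) *)
  (forall i : 'I_nout,
     (exists2 x0, in_poly Cin cin x0 &
        (Cout *m iter k (fcl A B (nn_out n nu L W b Wo bo)) x0) i 0 = cout i 0) /\
     (forall x0, in_poly Cin cin x0 ->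
        (Cout *m iter k (fcl A B (nn_out n nu L W b Wo bo)) x0) i 0 <= cout i 0)) ->
  (* X*_{k,out} subset of R_as *)
  (forall x, in_poly Cout cout x -> Ras x) ->
  (forall x0, Ras x0 ->
     (forall j : nat,
        nn_out n nu L W b Wo bo (iter j (fcl A B (nn_out n nu L W b Wo bo)) x0)
        = - (K *m iter j (fcl A B (nn_out n nu L W b Wo bo)) x0)) /\
     cvg_to_origin (fun j => iter j (fcl A B (nn_out n nu L W b Wo bo)) x0)) /\
  (forall x0, in_poly Cin cin x0 ->
     cvg_to_origin (fun j => iter j (fcl A B (nn_out n nu L W b Wo bo)) x0)).
Proof.
move=> _ _ _ _ _ [P [_ _ _ _ Hst]] Haff Hinv HRas _ Hcout Hsub.
set f := fcl A B (nn_out n nu L W b Wo bo).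
have Hout : forall x, Ras x -> nn_out n nu L W b Wo bo x = - (K *m x).
  move=> x /HRas [Hreq _]; by rewrite /nn_out (@xi_eta R n L W b x Hreq L (leqnn L)) Haff.
have Hit : forall x0, Ras x0 -> forall j, Ras (iter j f x0).
  move=> x0 H0; elim=> //= j IH; exact: (Hinv _ IH).2.
have Hlin : forall x0, Ras x0 -> forall j, iter j f x0 = iter j (mulmx (A - B *m K)) x0.
  move=> x0 H0; elim=> //= j IH; rewrite -IH /f /fcl Hout; last exact: Hit.
  by rewrite mulmxBl mulmxN -mulmxA.
have P1 : forall x0, Ras x0 ->
   (forall j, nn_out n nu L W b Wo bo (iter j f x0) = - (K *m iter j f x0)) /\
   cvg_to_origin (fun j => iter j f x0).
  move=> x0 H0; split; first by move=> j; apply: Hout; apply: Hit.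
  move=> i; have := Hst x0 i.
  by under eq_fun => j do rewrite -Hlin //.
split; first exact: P1.
move=> x0 Hx0 i.
have Hk : Ras (iter k f x0) by apply: Hsub => j; apply: (Hcout j).2.
have E : (fun j => iter (j + k) f x0 i 0) = (fun j => iter j f (iter k f x0) i 0).
  by apply: funext => j; rewrite iterD.
have H := (P1 _ Hk).2 i.
rewrite -E in H.
by move: H; rewrite (@cvg_shiftn k R^o (fun j => iter j f x0 i 0)).
Qed.
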